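(* Let $n$ be a positive even integer and let $$R=H^{\otimes n}\left(\sum_{x\in\{0,1\}^n}(-1)^{\sum_{i=1}^{n-1}x_ix_{i+1}}|x\rangle\langle x|\right)H^{\otimes n},$$ a $2^n\times 2^n$ real matrix indexed by $\{0,1\}^n$. Then every matrix element of $R$ satisfies $|\langle y|R|z\rangle|=2^{-n/2}$ for all $y,z\in\{0,1\}^n$, and in every row of $R$ there are exactly $\frac12(2^n+2^{n/2})$ positive entries and $\frac12(2^n-2^{n/2})$ negative entries.
   Context: $H=\frac{1}{\sqrt2}\begin{pmatrix}1&1\\1&-1\end{pmatrix}$ is the Hadamard matrix, $H^{\otimes n}$ its $n$-fold tensor power, and $\{|x\rangle : x\in\{0,1\}^n\}$ is the computational basis of $(\mathbb{C}^2)^{\otimes n}$, with $x=x_1x_2\ldots x_n$. *)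

(* Defs.v *)
From mathcomp Require Import all_boot all_order all_algebra.
Set Implicit Arguments. Unset Strict Implicit. Unset Printing Implicit Defensive.
Import Order.TTheory GRing.Theory Num.Theory.
Local Open Scope ring_scope.

(* Computational basis of (C^2)^{\otimes n}: bit strings x = x_1 ... x_n,
   represented as n.-tuples of booleans; x_{i+1} (1-indexed) is nth false x i. *)

Definition bit2ord (b : bool) : 'I_2 := inord (nat_of_bool b).

Definition hadamard (R : rcfType) : 'M[R]_2 :=
  (Num.sqrt 2)^-1 *: \matrix_(i < 2, j < 2) (-1) ^+ (i * j)%N.

Definition hadamard_n (R : rcfType) (n : nat) (y x : n.-tuple bool) : R :=
  \prod_(i < n) hadamard R (bit2ord (nth false y i)) (bit2ord (nth false x i)).

Definition phase (R : rcfType) (n : nat) (x : n.-tuple bool) : R :=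
  (-1) ^+ (\sum_(i < n.-1) (nth false x i && nth false x i.+1 : nat))%N.

Definition Rmat (R : rcfType) (n : nat) (y z : n.-tuple bool) : R :=
  \sum_(x : n.-tuple bool) hadamard_n R y x * phase R x * hadamard_n R x z.

(* Main.v *)
Require Import Defs.
From mathcomp Require Import all_boot all_order all_algebra.
From mathcomp Require Import ring zify.
Import Order.TTheory GRing.Theory Num.Theory.
Local Open Scope ring_scope.

Fixpoint allb (n : nat) : seq (seq bool) :=
  if n is m.+1 then [seq true :: s | s <- allb m] ++ [seq false :: s | s <- allb m]
  else [:: [::]].

Lemma mem_allb n s : (s \in allb n) = (size s == n).
Proof.
elim: n s => [|n IH] s; first by case: s.
case: s => [|b s] /=.
  rewrite mem_cat; apply/negbTE; apply/norP; split; apply/mapP => -[? _ //].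
rewrite mem_cat eqSS -IH; case: b.
  rewrite mem_map; last by move=> ? ? [].
  by apply/orP/idP => [[//|/mapP[? _ //]]|->]; left.
rewrite mem_map; last by move=> ? ? [].
by apply/orP/idP => [[/mapP[? _ //]|//]|->]; right.
Qed.

Lemma uniq_allb n : uniq (allb n).
Proof.
elim: n => [//|n IH] /=.
rewrite cat_uniq !map_inj_uniq //; try by move=> ? ? [].
rewrite IH /= andbT; apply/hasPn => s /mapP[t _ ->]; apply/mapP => -[u _ //].
Qed.

Lemma size_allb n : size (allb n) = (2 ^ n)%N.
Proof. elim: n => //= n IH; rewrite size_cat !size_map IH expnS; lia. Qed.

Lemma big_allbS (T : Type) (idx : T) (op : Monoid.com_law idx) n (F : seq bool -> T) :
  \big[op/idx]_(s <- allb n.+1) F s =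
  op (\big[op/idx]_(s <- allb n) F (true :: s)) (\big[op/idx]_(s <- allb n) F (false :: s)).
Proof. by rewrite /= big_cat !big_map. Qed.

Lemma perm_tuple n : perm_eq (map val (index_enum {: n.-tuple bool})) (allb n).
Proof.
apply: uniq_perm.
- rewrite map_inj_uniq ?index_enum_uniq //; exact: val_inj.
- exact: uniq_allb.
move=> s; rewrite mem_allb; apply/mapP/idP => [[t _ ->]|/eqP H].
  by rewrite size_tuple.
have Hs : size s == n by rewrite H.
by exists (Tuple Hs); rewrite ?mem_index_enum.
Qed.

Lemma big_tuple_allb (T : Type) (idx : T) (op : Monoid.com_law idx) n
   (P : pred (seq bool)) (F : seq bool -> T) :
  \big[op/idx]_(x : n.-tuple bool | P (val x)) F (val x) =
  \big[op/idx]_(s <- allb n | P s) F s.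
Proof. by rewrite -(perm_big _ (perm_tuple n)) big_map. Qed.

Lemma big_tuple_allbT (T : Type) (idx : T) (op : Monoid.com_law idx) n
   (F : seq bool -> T) :
  \big[op/idx]_(x : n.-tuple bool) F (val x) = \big[op/idx]_(s <- allb n) F s.
Proof. by rewrite -(perm_big _ (perm_tuple n)) big_map. Qed.
Fixpoint dt (a x : seq bool) : bool :=
  match a, x with a0 :: a', x0 :: x' => (a0 && x0) (+) dt a' x' | _, _ => false end.
Fixpoint qf (x : seq bool) : bool :=
  match x with a :: ((b :: _) as t) => (a && b) (+) qf t | _ => false end.
Definition fl (c : bool) (s : seq bool) :=
  match s with [::] => [::] | b :: s => (b (+) c) :: s end.
Definition SS (R : rcfType) (a : seq bool) : R :=
  \sum_(x <- allb (size a)) (-1) ^+ (dt a x (+) qf x).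

Lemma qf_cons a x : qf (a :: x) = (a && head false x) (+) qf x.
Proof. case: x => [|b t] /=; first by rewrite andbF. done. Qed.

Lemma dt_fl c a x : size a = size x -> (c && head false x) (+) dt a x = dt (fl c a) x.
Proof.
case: a x => [|b a] [|u x] //=; first by case: c.
by move=> _; case: c; case: b; case: u; case: (dt a x).
Qed.

Lemma size_fl c a : size (fl c a) = size a.
Proof. by case: a. Qed.

Lemma SS_rec (R : rcfType) a0 a1 a :
  SS R [:: a0, a1 & a] = 2 * (-1) ^+ (a1 && a0) * SS R (fl a0 a).
Proof.
rewrite /SS size_fl [size _]/= !big_allbS -!big_split mulr_sumr.
apply: eq_big_seq => x; rewrite mem_allb => /eqP Hx.
rewrite !qf_cons; rewrite /= -(@dt_fl a0 a x) ?Hx //.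
move: (dt a x) (qf x) (head false x) => d e h.
by case: a0; case: a1; case: d; case: e; case: h; rewrite /= ?expr0 ?expr1; ring.
Qed.

Lemma SS_val (R : rcfType) k : forall a, size a = (k + k)%N ->
  exists e : bool, SS R a = (-1) ^+ e * 2 ^+ k.
Proof.
elim: k => [|k IH] a.
  case: a => [|? ?] // _; exists false; by rewrite /SS /= big_cons big_nil /= expr0 !mul1r addr0.
case: a => [|a0 [|a1 a]] /=; try by rewrite addnS.
rewrite addnS addSn => -[] Ha.
have [e He] := IH (fl a0 a) (etrans (size_fl a0 a) Ha).
exists ((a1 && a0) (+) e); rewrite SS_rec He signr_addb exprS; ring.
Qed.

Lemma dt_nseq y n : dt y (nseq n false) = false.
Proof. by elim: y n => [|b y IH] [|n] //=; rewrite IH andbF. Qed.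

Lemma qf_nseq n : qf (nseq n false) = false.
Proof. elim: n => [|n IH] //; rewrite -[nseq _ _]/(false :: nseq n false) qf_cons IH. by case: n {IH}. Qed.

Lemma dtC a x : dt a x = dt x a.
Proof. by elim: a x => [|b a IH] [|u x] //=; rewrite IH andbC. Qed.

Lemma charsum (R : rcfType) n x : size x = n ->
  \sum_(z <- allb n) (-1) ^+ (dt z x) = (if x == nseq n false then 2 ^+ n else 0 : R).
Proof.
elim: n x => [|n IH] [|x0 x] //=.
  by move=> _; rewrite big_cons big_nil expr0 addr0.
move=> [] Hx; rewrite big_allbS -big_split.
rewrite (_ : \sum_(i <- allb n) _ = (1 + (-1) ^+ x0) * \sum_(i <- allb n) (-1) ^+ (dt i x)); last first.
  rewrite mulr_sumr; apply: eq_bigr => i _ /=; rewrite !signr_addb; case: x0; rewrite /= ?expr0 ?expr1; ring.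
rewrite IH // eqseq_cons; case: x0 => /=; first by rewrite expr1 addrN mul0r.
by case: (x == _); rewrite ?expr0 ?mulr0 // exprS; ring.
Qed.

Definition TT (R : rcfType) n (y z : seq bool) : R :=
  \sum_(x <- allb n) (-1) ^+ (dt y x (+) dt z x (+) qf x).

Lemma sumTT (R : rcfType) n y : \sum_(z <- allb n) TT R n y z = 2 ^+ n.
Proof.
rewrite /TT exchange_big /=.
have -> : \sum_(j <- allb n) \sum_(i <- allb n) (-1) ^+ (dt y j (+) dt i j (+) qf j)
   = \sum_(j <- allb n) ((-1) ^+ (dt y j (+) qf j) * (if j == nseq n false then 2 ^+ n else 0)) :> R.
  apply: eq_big_seq => j; rewrite mem_allb => /eqP Hj.
  rewrite -(@charsum R n j Hj) mulr_sumr; apply: eq_bigr => i _.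
  by rewrite -signr_addb; congr (_ ^+ _); case: (dt y j); case: (dt i j); case: (qf j).
rewrite (bigD1_seq (nseq n false)) ?uniq_allb ?mem_allb ?size_nseq //= eqxx.
rewrite big1 ?addr0 ?dt_nseq ?qf_nseq ?expr0 ?mul1r // => i /negbTE ->.
by rewrite mulr0.
Qed.

Fixpoint xs (y z : seq bool) : seq bool :=
  match y, z with a :: y', b :: z' => (a (+) b) :: xs y' z' | _, _ => [::] end.

Lemma size_xs y z : size y = size z -> size (xs y z) = size y.
Proof. by elim: y z => [|a y IH] [|b z] //= [] /IH ->. Qed.

Lemma dt_xs y z x : size y = size x -> size z = size x ->
  dt y x (+) dt z x = dt (xs y z) x.
Proof.
elim: y z x => [|a y IH] [|b z] [|u x] //= [] Hy [] Hz.
rewrite -IH //; by case: a; case: b; case: u; case: (dt y x); case: (dt z x).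
Qed.

Lemma TT_SS (R : rcfType) n y z : size y = n -> size z = n -> TT R n y z = SS R (xs y z).
Proof.
move=> Hy Hz; rewrite /TT /SS size_xs ?Hy ?Hz //.
apply: eq_big_seq => x; rewrite mem_allb => /eqP Hx.
by rewrite dt_xs // ?Hy ?Hz ?Hx.
Qed.

Lemma had_entry (R : rcfType) (u v : bool) :
  hadamard R (bit2ord u) (bit2ord v) = (Num.sqrt 2)^-1 * (-1) ^+ (u && v).
Proof.
rewrite /hadamard !mxE /bit2ord !inordK ?ltnS ?leq_b1 //.
by case: u; case: v.
Qed.

Lemma hadn_seq (R : rcfType) n (y x : seq bool) : size y = n -> size x = n ->
  \prod_(i < n) hadamard R (bit2ord (nth false y i)) (bit2ord (nth false x i))
  = ((Num.sqrt 2)^-1) ^+ n * (-1) ^+ (dt y x).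
Proof.
elim: n y x => [|n IH] [|y0 y] [|x0 x] //=.
  by move=> _ _; rewrite big_ord0 !expr0 mulr1.
move=> [] Hy [] Hx; rewrite big_ord_recl /= IH // had_entry signr_addb exprS; ring.
Qed.

Lemma phase_seq (R : rcfType) n (x : seq bool) : size x = n ->
  (-1) ^+ (\sum_(i < n.-1) (nth false x i && nth false x i.+1 : nat))%N = (-1) ^+ (qf x) :> R.
Proof.
move=> <-; elim: x => [|a x IH]; first by rewrite big_ord0.
case: x IH => [|b t] IH; first by rewrite big_ord0.
rewrite [qf _]qf_cons [head _ _]/= signr_addb -IH.
rewrite [(size _).-1]/= big_ord_recl exprD /=.
congr (_ * (-1) ^+ _); apply: eq_bigr => i _; by rewrite lift0.
Qed.

Lemma Rmat_TT (R : rcfType) n (y z : n.-tuple bool) :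
  Rmat R y z = (2 ^+ n)^-1 * TT R n y z.
Proof.
rewrite /TT mulr_sumr.
transitivity (\sum_(x : n.-tuple bool)
   (2 ^+ n)^-1 * (-1) ^+ (dt y (val x) (+) dt z (val x) (+) qf (val x)) : R).
  apply: eq_bigr => x _.
  rewrite /hadamard_n !hadn_seq ?size_tuple // /phase (@phase_seq R n x (size_tuple x)).
  have Hc : ((Num.sqrt 2)^-1) ^+ n * ((Num.sqrt 2)^-1) ^+ n = (2 ^+ n)^-1 :> R.
    by rewrite -exprMn -invfM -expr2 sqr_sqrtr ?ler0n // exprVn.
  rewrite (dtC x) !signr_addb -Hc; ring.
by rewrite (@big_tuple_allbT _ _ _ n (fun s => (2 ^+ n)^-1 * (-1) ^+ (dt y s (+) dt z s (+) qf s))).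
Qed.

Lemma sumr_count (R : rcfType) (T : Type) (a : pred T) (r : seq T) :
  \sum_(s <- r) ((a s : nat)%:R : R) = (count a r)%:R.
Proof.
rewrite -sum1_count natr_sum [RHS]big_mkcond; apply: eq_bigr => s _; by case: (a s).
Qed.

Lemma card_sign (R : rcfType) n (y : n.-tuple bool) (p : pred R) :
  (forall s, p ((2 ^+ n)^-1 * s) = p s) ->
  #|[set z : n.-tuple bool | p (Rmat R y z)]| = count (fun s => p (TT R n y s)) (allb n).
Proof.
move=> Hp; rewrite -sum1_card.
transitivity (\sum_(x : n.-tuple bool | (fun s => p (TT R n y s)) (val x)) 1%N).
  by apply: eq_bigl => z; rewrite inE Rmat_TT Hp.
by rewrite -sum1_count; exact: (@big_tuple_allb _ _ _ n (fun s => p (TT R n y s)) (fun _ => 1%N)).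
Qed.

Theorem mainTheorem2 (R : rcfType) (n : nat) (n_pos : (0 < n)%N) (n_even : ~~ odd n) :
  (forall y z : n.-tuple bool, `|Rmat R y z| = (2 ^+ (n %/ 2))^-1)
  /\ (forall y : n.-tuple bool,
        #|[set z : n.-tuple bool | 0 < Rmat R y z]| = ((2 ^ n + 2 ^ (n %/ 2)) %/ 2)%N
     /\ #|[set z : n.-tuple bool | Rmat R y z < 0]| = ((2 ^ n - 2 ^ (n %/ 2)) %/ 2)%N).
Proof.
set k := (n %/ 2)%N.
have Hn : n = (k + k)%N.
  by rewrite /k divn2 addnn -[in LHS](odd_double_half n) (negbTE n_even).
have H2k : (2 ^+ k : R) != 0 by rewrite expf_neq0 // pnatr_eq0.
have H2kp : (0 : R) < 2 ^+ k by rewrite exprn_gt0 // ltr0n.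
have H2kn : (2 ^+ k < 0 :> R) = false by rewrite ltNge (ltW H2kp).
have H2np : (0 : R) < (2 ^+ n)^-1 by rewrite invr_gt0 exprn_gt0 // ltr0n.
have HT : forall (y : n.-tuple bool) s, size s = n ->
    exists e : bool, TT R n y s = (-1) ^+ e * 2 ^+ k.
  move=> y s Hs; rewrite (@TT_SS R n y s (size_tuple y) Hs).
  apply: SS_val; rewrite size_xs ?size_tuple ?Hs //.
split.
  move=> y z; rewrite Rmat_TT.
  have [e ->] := HT y z (size_tuple z).
  rewrite normrM normrM normr_sign mul1r ger0_norm ?(ltW H2np) // ger0_norm ?(ltW H2kp) //.
  rewrite Hn exprD invfM -mulrA mulVf // mulr1 //.
move=> y.
rewrite (@card_sign R n y (fun x => 0 < x)); last by move=> s; rewrite /= pmulr_rgt0.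
rewrite (@card_sign R n y (fun x => x < 0)); last by move=> s; rewrite /= pmulr_rlt0.
set f := TT R n y.
set P := count _ _; set N := count _ _.
have Hpt : {in allb n, forall s, f s = 2 ^+ k * ((nat_of_bool (0 < f s))%:R - (nat_of_bool (f s < 0))%:R)}.
  move=> s; rewrite mem_allb => /eqP Hs; rewrite /f; have [e ->] := HT y s Hs.
  case: e; rewrite ?expr0 ?expr1 ?mul1r ?mulN1r ?oppr_gt0 ?oppr_lt0 H2kp ?ltNge ?(ltW H2kp) /=; ring.
have HPN : (P + N)%N = (2 ^ n)%N.
  rewrite -(size_allb n) -(count_predC (fun s => 0 < f s)); congr (_ + _)%N.
  apply: eq_in_count => s; rewrite mem_allb => /eqP Hs; rewrite /= /f; have [e ->] := HT y s Hs.
  case: e; rewrite /= ?expr0 ?expr1 ?mul1r ?mulN1r ?oppr_gt0 ?oppr_lt0 ?H2kp //.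
  symmetry; apply/negP => H; have := lt_trans H2kp H; by rewrite ltxx.
have Hsum : 2 ^+ k * (P%:R - N%:R) = 2 ^+ k * 2 ^+ k :> R.
  rewrite -exprD -Hn -(sumTT R n y) -/f (eq_big_seq _ Hpt) -mulr_sumr sumrB.
  by rewrite !sumr_count.
have HPN' : P = (N + 2 ^ k)%N.
  apply/eqP; rewrite -(eqr_nat R) natrD natrX -(mulfI H2k Hsum) addrC subrK //.
rewrite -/k; split; lia.
Qed.
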